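(* Let $P=(Q,I,M,\Delta)$ be a broadcast protocol, let $F\subseteq Q$, and let $S$ be the set of states returned by the saturation algorithm on input $P$. If $F\cap S\neq\emptyset$, then there exists a reconfigurable execution $\rho$ covering $F$ such that $\rho$ has at most $2|Q|$ nodes and length at most $2|Q|^2$.
   Context: A broadcast protocol is a tuple $P=(Q,I,M,\Delta)$ where $Q$ is a finite set of states, $I\subseteq Q$ is the set of initial states, $M$ is a finite message alphabet and $\Delta\subseteq Q\times\{!!m,\ ??m \mid m\in M\}\times Q$ is the transition relation ($!!m$ = broadcast of $m$, $??m$ = reception of $m$). Protocols are assumed complete for receptions: for every $q\in Q$ and $m\in M$ there is $q'$ with $(q,??m,q')\in\Delta$. A configuration is a finite undirected graph $\gamma=(V,E,L)$ with $E\subseteq V\times V$ symmetric and irreflexive and $L:V\to Q$; $L(\gamma)$ denotes the set $L(V)$ of labels occurring in $\gamma$; $\gamma$ is initial if $L(V)\subseteq I$. For $v\in V$, its neighbours are the $v'$ with $(v,v')\in E$. A reconfigurable step goes from $\gamma=(V,E,L)$ to $\gamma'=(V,E',L')$ (same node set, arbitrary new edge set $E'$) if there exist a node $v$ and a message $m$ with $(L(v),!!m,L'(v))\in\Delta$ and, for every $v'\neq v$: if $v'$ is a neighbour of $v$ in $E$ then $(L(v'),??m,L'(v'))\in\Delta$, otherwise $L'(v')=L(v')$; $v$ is then said to broadcast in this step. A reconfigurable execution is a sequence $\gamma_0,\dots,\gamma_r$ of configurations over a fixed node set with $\gamma_0$ initial and each $\gamma_i\to\gamma_{i+1}$ a reconfigurable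 step; its number of nodes is $|V|$, its length is $r$, and it covers $F$ if $L(\gamma_r)\cap F\neq\emptyset$. The saturation algorithm on input $P$: start with $S:=I$, $c:=|I|$; repeat: if there is $(q_1,!!m,q_2)\in\Delta$ with $q_1\in S$, $q_2\notin S$, add $q_2$ to $S$ and set $c:=c+1$; else if there are $(q_1,!!m,q_2)\in\Delta$ and $(q_1',??m,q_2')\in\Delta$ with $q_1,q_2,q_1'\in S$ and $q_2'\notin S$, add $q_2'$ to $S$ and set $c:=c+2$; else stop and return $S$ (choices among candidates are arbitrary). *)

(* Defs.v *)
From mathcomp Require Import all_boot.
Set Implicit Arguments. Unset Strict Implicit. Unset Printing Implicit Defensive.

Inductive action (M : Type) := Bcast of M | Recv of M.
Arguments Bcast {M}. Arguments Recv {M}.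

Definition reception_complete (Q M : Type) (Delta : Q -> action M -> Q -> bool) :=
  forall (q : Q) (m : M), exists q', Delta q (Recv m) q'.

Record config (Q : Type) (n : nat) := Config {
  edge : 'I_n -> 'I_n -> bool;
  lab  : 'I_n -> Q }.

Definition wf_config Q n (g : config Q n) :=
  (forall v v', edge g v v' = edge g v' v) /\ (forall v, edge g v v = false).

Definition initial_config (Q : finType) n (I : {set Q}) (g : config Q n) :=
  forall v, lab g v \in I.

(* Reconfigurable step: the new edge set of g' is arbitrary. *)
Definition rstep (Q M : Type) (Delta : Q -> action M -> Q -> bool) n
    (g g' : config Q n) :=
  exists (v : 'I_n) (m : M),
    Delta (lab g v) (Bcast m) (lab g' v) /\
    forall v', v' != v ->
      (edge g v v' -> Delta (lab g v') (Recv m) (lab g' v')) /\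
      (~~ edge g v v' -> lab g' v' = lab g v').

Definition rexec (Q : finType) (M : Type) (I : {set Q})
    (Delta : Q -> action M -> Q -> bool) n r (gs : nat -> config Q n) :=
  (forall i, i <= r -> wf_config (gs i)) /\
  initial_config I (gs 0) /\
  (forall i, i < r -> rstep Delta (gs i) (gs i.+1)).

Definition covers (Q : finType) n (g : config Q n) (F : {set Q}) :=
  exists v, lab g v \in F.

(* The saturation algorithm, modelled as a nondeterministic transition
   system on pairs (S, c). *)
Definition bcast_candidate (Q : finType) (M : Type)
    (Delta : Q -> action M -> Q -> bool) (S : {set Q}) (q2 : Q) :=
  exists q1 m, [/\ q1 \in S, q2 \notin S & Delta q1 (Bcast m) q2].

Definition recv_candidate (Q : finType) (M : Type)
    (Delta : Q -> action M -> Q -> bool) (S : {set Q}) (q2' : Q) :=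
  exists q1 q2 q1' m, [/\ q1 \in S, q2 \in S, q1' \in S & q2' \notin S] /\
                      Delta q1 (Bcast m) q2 /\ Delta q1' (Recv m) q2'.

Inductive sat_step (Q : finType) (M : Type) (Delta : Q -> action M -> Q -> bool) :
    {set Q} * nat -> {set Q} * nat -> Prop :=
  | sat_b S c q2 : bcast_candidate Delta S q2 ->
      sat_step Delta (S, c) (q2 |: S, c + 1)
  | sat_r S c q2' : (forall q, ~ bcast_candidate Delta S q) ->
      recv_candidate Delta S q2' ->
      sat_step Delta (S, c) (q2' |: S, c + 2).

Inductive sat_run (Q : finType) (M : Type) (Delta : Q -> action M -> Q -> bool) :
    {set Q} * nat -> {set Q} * nat -> Prop :=
  | sat_refl x : sat_run Delta x x
  | sat_trans x y z : sat_step Delta x y -> sat_run Delta y z -> sat_run Delta x z.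

Definition sat_stopped (Q : finType) (M : Type)
    (Delta : Q -> action M -> Q -> bool) (S : {set Q}) :=
  (forall q, ~ bcast_candidate Delta S q) /\ (forall q, ~ recv_candidate Delta S q).

Definition saturation_output (Q : finType) (M : Type) (I : {set Q})
    (Delta : Q -> action M -> Q -> bool) (S : {set Q}) :=
  exists c, sat_run Delta (I, #|I|) (S, c) /\ sat_stopped Delta S.

(* Main.v *)
Require Import Defs.
From mathcomp Require Import all_boot zify.
Set Implicit Arguments. Unset Strict Implicit. Unset Printing Implicit Defensive.

Record stp (Q M : Type) := Stp { sv : nat; sm : M; sR : nat -> bool; sL : nat -> Q }.
Arguments Stp {Q M}.

Definition stepok {Q M : Type} (Delta : Q -> action M -> Q -> bool) (L : nat -> Q)
  (s : stp Q M) : Prop :=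
  Delta (L (sv s)) (Bcast (sm s)) (sL s (sv s)) /\
  (forall w, w != sv s -> (sR s w -> Delta (L w) (Recv (sm s)) (sL s w)) /\
                          (~~ sR s w -> sL s w = L w)).

Fixpoint valid {Q M : Type} (Delta : Q -> action M -> Q -> bool) (L : nat -> Q)
  (ss : seq (stp Q M)) : Prop :=
  if ss is s :: ss' then stepok Delta L s /\ valid Delta (sL s) ss' else True.

Fixpoint finL {Q M : Type} (L : nat -> Q) (ss : seq (stp Q M)) : nat -> Q :=
  if ss is s :: ss' then finL (sL s) ss' else L.

Definition ext {Q : Type} (n u : nat) (L : nat -> Q) : nat -> Q :=
  fun w => if w == n then L u else L w.

Fixpoint cpy {Q M : Type} (u n : nat) (Lp : nat -> Q) (ss : seq (stp Q M)) : seq (stp Q M) :=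
  match ss with
  | [::] => [::]
  | s :: ss' =>
    if sv s == u then
      Stp u (sm s) (fun w => if w == n then false else sR s w)
          (fun w => if w == n then Lp u else sL s w)
      :: Stp n (sm s) (fun _ => false) (ext n u (sL s)) :: cpy u n (sL s) ss'
    else Stp (sv s) (sm s) (fun w => if w == n then sR s u else sR s w) (ext n u (sL s))
      :: cpy u n (sL s) ss'
  end.

Lemma finL_cpy Q M u n (L : nat -> Q) (ss : seq (stp Q M)) :
  finL (ext n u L) (cpy u n L ss) = ext n u (finL L ss).
Proof. elim: ss L => [|s ss IH] L //=. case: ifP => _ /=; exact: IH. Qed.

Lemma size_cpy Q M u n (L : nat -> Q) (ss : seq (stp Q M)) :
  size (cpy u n L ss) = size ss + count (fun s => sv s == u) ss.
Proof. elim: ss L => [|s ss IH] L //=. case: ifP => H /=; rewrite IH; move: H; case: (sv s == u) => /= _; lia. Qed.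

Lemma count_cpy Q M u n w (L : nat -> Q) (ss : seq (stp Q M)) :
  count (fun s => sv s == w) (cpy u n L ss) =
  count (fun s => sv s == w) ss + (if w == n then count (fun s => sv s == u) ss else 0).
Proof.
elim: ss L => [|s ss IH] L /=; first by case: ifP.
case: ifP => H /=; rewrite IH.
- move/eqP: H => ->; rewrite (eq_sym n w); case: (w == n); case: (u == w) => /=; lia.
- case: (w == n); lia.
Qed.

Lemma count0 Q M n w (ss : seq (stp Q M)) :
  all (fun s => sv s < n) ss -> n <= w -> count (fun s => sv s == w) ss = 0.
Proof.
elim: ss => //= s ss IH /andP[H1 H2] Hw. rewrite IH //.
case: eqP => // E. lia.
Qed.

Lemma all_cpy Q M u n (L : nat -> Q) (ss : seq (stp Q M)) :
  u < n -> all (fun s => sv s < n) ss -> all (fun s => sv s < n.+1) (cpy u n L ss).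
Proof.
move=> Hu. elim: ss L => [|s ss IH] L //= /andP[H1 H2].
case: ifP => _ /=; rewrite IH // ?andbT; try (apply/andP; split); lia.
Qed.

Lemma valid_cpy Q M (Delta : Q -> action M -> Q -> bool) u n (L : nat -> Q) ss :
  u < n -> all (fun s => sv s < n) ss -> valid Delta L ss ->
  valid Delta (ext n u L) (cpy u n L ss).
Proof.
move=> Hu. have Hun : (u == n) = false by apply/eqP; lia.
elim: ss L => [|s ss IH] L //= /andP[Hs Hall] [[Hb Hr] Hv].
have Hsn : (sv s == n) = false by apply/eqP; lia.
case: ifP => Hsu.
- move/eqP: Hsu => Hsu. split; [|split; [|exact: IH]].
  + rewrite /stepok /ext /= Hun. rewrite -Hsu. split; first by [].
    move=> w Hw. case: ifP => Hwn //=. exact: Hr.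
  + rewrite /stepok /ext /= eqxx. split; first by rewrite -Hsu.
    move=> w /negbTE Hw. by rewrite Hw.
- split; last exact: IH.
  rewrite /stepok /ext /= Hsn. split => // w Hw.
  case: ifP => Hwn.
  + apply: Hr. by rewrite eq_sym Hsu.
  + exact: Hr.
Qed.

Lemma valid_cat Q M (Delta : Q -> action M -> Q -> bool) (L : nat -> Q) s1 s2 :
  valid Delta L (s1 ++ s2) <-> valid Delta L s1 /\ valid Delta (finL L s1) s2.
Proof.
elim: s1 L => [|s s1 IH] L /=; first by tauto.
rewrite IH; tauto.
Qed.

Lemma finL_cat Q M (L : nat -> Q) (s1 s2 : seq (stp Q M)) :
  finL L (s1 ++ s2) = finL (finL L s1) s2.
Proof. by elim: s1 L => [|s s1 IH] L //=. Qed.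

Lemma valid_nth Q M (Delta : Q -> action M -> Q -> bool) (L : nat -> Q) ss i :
  valid Delta L ss -> i < size ss ->
  exists s, [/\ ohead (drop i ss) = Some s, stepok Delta (finL L (take i ss)) s,
     finL L (take i.+1 ss) = sL s & forall P : pred (stp Q M), all P ss -> P s].
Proof.
elim: ss L i => [|s ss IH] L i //= [H1 H2] Hi.
case: i Hi => [|i] Hi.
- exists s; rewrite !take0 drop0; split => // P /andP[] //.
- have [s' [A B C D]] := IH _ _ H2 Hi. exists s'; split => //.
  by move=> P /andP[_ /D].
Qed.

Definition Inv (Q M : finType) (I : {set Q}) (Delta : Q -> action M -> Q -> bool)
    (S : {set Q}) :=
  exists n (L0 : nat -> Q) (ss : seq (stp Q M)) j,
   [/\ (forall w, w < n -> L0 w \in I), all (fun s => sv s < n) ss,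
       (forall q, q \in S -> exists2 w, w < n & finL L0 ss w = q), valid Delta L0 ss &
       [/\ n <= 2 * #|S|, j <= #|S|, size ss <= n * j &
           forall w, count (fun s => sv s == w) ss <= j]].

Lemma ext_prop {Q : Type} (P : Q -> Prop) n u (L : nat -> Q) :
  u < n -> (forall w, w < n -> P (L w)) -> forall w, w < n.+1 -> P (ext n u L w).
Proof.
move=> Hu H w Hw; rewrite /ext; case: ifP => [_|/eqP Hn]; apply: H; lia.
Qed.

Lemma ext_lt {Q : Type} n u (L : nat -> Q) w : w < n -> ext n u L w = L w.
Proof. move=> Hw; rewrite /ext; case: ifP => // /eqP; lia. Qed.

Lemma ext_n {Q : Type} n u (L : nat -> Q) : ext n u L n = L u.
Proof. by rewrite /ext eqxx. Qed.

Lemma inv_init (Q M : finType) (I : {set Q}) (Delta : Q -> action M -> Q -> bool) (q0 : Q) :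
  Inv I Delta I.
Proof.
exists #|I|, (fun w => nth q0 (enum I) w), [::], 0. split => //.
- move=> w Hw; rewrite -mem_enum mem_nth // -cardE //.
- move=> q Hq; exists (index q (enum I)).
  + by rewrite cardE index_mem mem_enum.
  + by rewrite /= nth_index // mem_enum.
- split => //; lia.
Qed.

Lemma inv_b (Q M : finType) (I : {set Q}) (Delta : Q -> action M -> Q -> bool) S q1 m q2 :
  Inv I Delta S -> q1 \in S -> q2 \notin S -> Delta q1 (Bcast m) q2 ->
  Inv I Delta (q2 |: S).
Proof.
case=> n [L0 [ss [j [HI Hall Hcov Hv [Hn Hj Hsz Hc]]]]] Hq1 Hq2 Hd.
have [w1 Hw1 Ew1] := Hcov _ Hq1.
pose Lf := ext n w1 (finL L0 ss).
exists n.+1, (ext n w1 L0),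
  (cpy w1 n L0 ss ++ [:: Stp n m (fun _ => false) (fun w => if w == n then q2 else Lf w)]), j.+1.
have Hcard : #|q2 |: S| = #|S|.+1 by rewrite cardsU1 Hq2.
rewrite Hcard. split.
- exact: (ext_prop (P := fun q => q \in I)).
- rewrite all_cat; apply/andP; split; first exact: all_cpy.
  by rewrite /= ltnSn.
- move=> q; rewrite in_setU1 => /predU1P [->|Hq].
  + exists n => //. by rewrite finL_cat /= eqxx.
  + have [w Hw Ew] := Hcov _ Hq. exists w; first lia.
    rewrite finL_cat /=.
    have -> : (w == n) = false by apply/eqP; lia.
    by rewrite /Lf ext_lt.
- apply/valid_cat; split; first exact: valid_cpy.
  rewrite finL_cpy /=; split => //. rewrite /stepok /=. split.
  + by rewrite eqxx ext_n Ew1.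
  + move=> w /negbTE Hw; rewrite Hw; split => //.
- split.
  + lia.
  + lia.
  + rewrite size_cat size_cpy /=. have := Hc w1. nia.
  + move=> w. rewrite count_cat count_cpy /=.
    case: (w =P n) => [->|Hwn].
    * rewrite (count0 Hall (leqnn n)) eqxx. have := Hc w1. lia.
    * have -> : (n == w) = false by apply/eqP => E; apply Hwn.
      have := Hc w. lia.
Qed.

Lemma inv_r (Q M : finType) (I : {set Q}) (Delta : Q -> action M -> Q -> bool)
   S q1 q2 q1' q2' m :
  Inv I Delta S -> q1 \in S -> q2 \in S -> q1' \in S -> q2' \notin S ->
  Delta q1 (Bcast m) q2 -> Delta q1' (Recv m) q2' ->
  Inv I Delta (q2' |: S).
Proof.
case=> n [L0 [ss [j [HI Hall Hcov Hv [Hn Hj Hsz Hc]]]]] Hq1 Hq2 Hq1' Hq2' Hd Hd'.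
have [w1 Hw1 Ew1] := Hcov _ Hq1.
have [w1' Hw1' Ew1'] := Hcov _ Hq1'.
pose L01 := ext n w1 L0. pose ss1 := cpy w1 n L0 ss.
pose L02 := ext n.+1 w1' L01. pose ss2 := cpy w1' n.+1 L01 ss1.
pose Lf2 := ext n.+1 w1' (ext n w1 (finL L0 ss)).
have Hw1'S : w1' < n.+1 by lia.
have Hall1 : all (fun s => sv s < n.+1) ss1 by exact: all_cpy.
have Hall2 : all (fun s => sv s < n.+2) ss2 by exact: all_cpy.
have HfinL : finL L02 ss2 = Lf2 by rewrite /L02 /ss2 finL_cpy /L01 /ss1 finL_cpy.
exists n.+2, L02,
  (ss2 ++ [:: Stp n m (fun w => w == n.+1)
     (fun w => if w == n then q2 else if w == n.+1 then q2' else Lf2 w)]), j.+1.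
have Hcard : #|q2' |: S| = #|S|.+1 by rewrite cardsU1 Hq2'.
rewrite Hcard. split.
- apply: (ext_prop (P := fun q => q \in I)) => //. exact: (ext_prop (P := fun q => q \in I)).
- rewrite all_cat; apply/andP; split => //.
  rewrite /= andbT; lia.
- move=> q; rewrite in_setU1 => /predU1P [->|Hq].
  + exists n.+1 => //. rewrite finL_cat /= eqxx.
    by have -> : (n.+1 == n) = false by apply/eqP; lia.
  + have [w Hw Ew] := Hcov _ Hq. exists w; first lia.
    rewrite finL_cat HfinL /=.
    have -> : (w == n) = false by apply/eqP; lia.
    have -> : (w == n.+1) = false by apply/eqP; lia.
    by rewrite /Lf2 !ext_lt //; lia.
- apply/valid_cat; split.
  + apply: valid_cpy => //. exact: valid_cpy.
  + rewrite HfinL /=; split => //. rewrite /stepok /=. split.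
    * rewrite eqxx /Lf2 ext_lt // ext_n Ew1. done.
    * move=> w /negbTE Hw; rewrite Hw. case: ifP => Hw2.
      -- move/eqP: Hw2 => ->. rewrite /Lf2 ext_n ext_lt // Ew1'. split => //.
      -- split => //.
- have Hcnt1 : count (fun s => sv s == w1') ss1 = count (fun s => sv s == w1') ss.
    rewrite /ss1 count_cpy. have -> : (w1' == n) = false by apply/eqP; lia. lia.
  split.
  + lia.
  + lia.
  + rewrite size_cat /ss2 size_cpy /ss1 size_cpy -/ss1 Hcnt1 /=.
    have := Hc w1. have := Hc w1'. nia.
  + move=> w. rewrite count_cat /ss2 count_cpy Hcnt1 /ss1 count_cpy /=.
    case: (w =P n.+1) => [->|Hwn1].
    * rewrite (count0 Hall (leqnSn n)).
      have -> : (n.+1 == n) = false by apply/eqP; lia.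
      have -> : (n == n.+1) = false by apply/eqP; lia.
      have := Hc w1'. lia.
    * 
      case: (w =P n) => [->|Hwn].
      -- rewrite (count0 Hall (leqnn n)) eqxx. have := Hc w1. lia.
      -- have -> : (n == w) = false by apply/eqP => E; apply Hwn.
         have := Hc w. lia.
Qed.

Lemma run_inv (Q M : finType) (I : {set Q}) (Delta : Q -> action M -> Q -> bool) x y :
  sat_run Delta x y -> Inv I Delta x.1 -> Inv I Delta y.1.
Proof.
elim => // {}x {}y z Hs _ IH HP; apply: IH.
case: x y / Hs HP => S c q.
- case=> q1 [m [Hq1 Hq2 Hd]] HP. exact: inv_b HP Hq1 Hq2 Hd.
- move=> _ [q1 [q2 [q1' [m [[H1 H2 H3 H4] [Hd Hd']]]]]] HP.
  exact: inv_r HP H1 H2 H3 H4 Hd Hd'.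
Qed.

Theorem theorem3p2 (Q M : finType) (I : {set Q})
    (Delta : Q -> action M -> Q -> bool)
    (Hcomplete : reception_complete Delta)
    (F S : {set Q}) :
  saturation_output I Delta S ->
  F :&: S != set0 ->
  exists (n r : nat) (gs : nat -> config Q n),
    [/\ rexec I Delta r gs, covers (gs r) F,
        n <= 2 * #|Q| & r <= 2 * #|Q| ^ 2].
Proof.
move=> [c [Hrun Hstop]] HFS.
have [q0 Hq0] := set0Pn _ HFS.
have := run_inv Hrun (inv_init I Delta q0).
case=> n [L0 [ss [j [HI Hall Hcov Hv [Hn Hj Hsz Hc]]]]].
pose gs := fun i => @Config Q n
  (fun x y : 'I_n => if ohead (drop i ss) is Some s then
      ((nat_of_ord x == sv s) && (nat_of_ord y != sv s) && sR s y) ||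
      ((nat_of_ord y == sv s) && (nat_of_ord x != sv s) && sR s x) else false)
  (fun x => finL L0 (take i ss) x).
have HSQ : #|S| <= #|Q| by exact: max_card.
exists n, (size ss), gs. split.
- split; [|split].
  + move=> i _; split => [x y|x] /=; case: (ohead _) => // s.
    * by rewrite orbC.
    * by case: (nat_of_ord x == sv s).
  + move=> v /=. rewrite take0 /=. exact: HI (ltn_ord v).
  + move=> i Hi. have [s [Hd Hst Hnext Hp]] := valid_nth Hv Hi.
    have Hsn : sv s < n := Hp _ Hall.
    exists (Ordinal Hsn), (sm s). rewrite /= Hnext Hd /=. case: Hst => Hb Hr.
    split; first exact Hb.
    move=> v' Hv'.
    have Hv'n : nat_of_ord v' != sv s.
      apply: contra Hv' => /eqP E; apply/eqP; exact: val_inj.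
    rewrite eqxx (negbTE Hv'n) /= orbF.
    exact: Hr _ Hv'n.
- move: Hq0; rewrite inE => /andP[HF HS].
  have [w Hw Ew] := Hcov _ HS. exists (Ordinal Hw). by rewrite /= take_size Ew.
- apply: (leq_trans Hn); rewrite leq_mul2l; apply/orP; right; exact: max_card.
- have HSQ' : #|S| <= #|Q| by exact: max_card.
  have -> : #|Q| ^ 2 = #|Q| * #|Q| by rewrite expnS expn1.
  apply: (leq_trans Hsz). rewrite mulnA. apply: leq_mul.
  + apply: (leq_trans Hn); rewrite leq_mul2l HSQ' orbT //.
  + exact: leq_trans Hj HSQ'.
Qed.
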